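(* Let $n \ge 2$. The minimum length of a solution to the $(n-1)$-out-of-$n$ picture-hanging puzzle on the nails $\{1,\dots,n\}$ is exactly $2n$, and this minimum is attained by the word \[ 1 + 2 + \cdots + n - 1 - 2 - \cdots - n. \]
   Context: Words are elements of the free group $F(V)$ on a finite set $V$ of generators (''nails''), written additively: $+$ is the (non-commutative) group operation, $-x$ the inverse, $0$ the identity (empty word); so $1+2+\cdots+n-1-2-\cdots-n$ denotes $x_1x_2\cdots x_n x_1^{-1}x_2^{-1}\cdots x_n^{-1}$. The length of an element is the number of letters (generators with sign) in its freely reduced word. For $S \subseteq V$, $w|_S$ denotes the image of $w$ under the homomorphism sending each generator in $S$ to $0$ and fixing the others. For $0 \le k \le n$ and $V=\{1,\dots,n\}$, a solution to the $k$-out-of-$n$ picture-hanging puzzle is a word $w \in F(V)$ such that for every $S \subseteq V$: $w|_S = 0$ if and only if $|S| \ge k$. *)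

(* Defs.v *)
(* Free group F({1..n}) modelled by words over letters
   ('I_n * bool): ordinal i stands for nail i+1, the boolean is the sign
   (true = +, false = -). A word denotes a group element; two words denote
   the same element iff their free reductions coincide. *)
From mathcomp Require Import all_boot.
Set Implicit Arguments. Unset Strict Implicit. Unset Printing Implicit Defensive.

Definition letter (n : nat) : Type := ('I_n * bool)%type.

Definition inv_letters n (x y : letter n) : bool := (x.1 == y.1) && (x.2 != y.2).

Definition freduce n (w : seq (letter n)) : seq (letter n) :=
  foldr (fun x acc => match acc with
                      | y :: t => if inv_letters x y then t else x :: acc
                      | [::] => [:: x]
                      end) [::] w.

Definition glength n (w : seq (letter n)) : nat := size (freduce w).

Definition restrict_trivial n (w : seq (letter n)) (S : {set 'I_n}) : bool :=
  freduce [seq x <- w | x.1 \notin S] == [::].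

Definition is_solution n (k : nat) (w : seq (letter n)) : Prop :=
  forall S : {set 'I_n}, restrict_trivial w S <-> k <= #|S|.

Definition commutator_word n : seq (letter n) :=
  [seq (i, true) | i <- enum 'I_n] ++ [seq (i, false) | i <- enum 'I_n].

(* Main.v *)
Require Import Defs.
From mathcomp Require Import all_boot zify.
Set Implicit Arguments. Unset Strict Implicit. Unset Printing Implicit Defensive.

Section S.
Variable n : nat.
Implicit Types (x y z : letter n) (w r t : seq (letter n)).

Definition step x (acc : seq (letter n)) :=
  match acc with y :: t => if inv_letters x y then t else x :: acc | [::] => [:: x] end.

Lemma freduce_cons x w : freduce (x :: w) = step x (freduce w).
Proof. by []. Qed.
Lemma freduce_nil : freduce [::] = [::] :> seq (letter n).
Proof. by []. Qed.

Definition nr x y := ~~ inv_letters x y.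
Definition reduced w := if w is x :: t then path nr x t else true.

Lemma reduced_step x r : reduced r -> reduced (step x r).
Proof.
case: r => [|y t] //= Hr.
case: ifP => Hi //=; last by rewrite /nr Hi Hr.
by case: t Hr => //= z t /andP[].
Qed.

Lemma reduced_freduce w : reduced (freduce w).
Proof. elim: w => [|x w IH] //=; exact: reduced_step. Qed.

Lemma freduce_id w : reduced w -> freduce w = w.
Proof.
elim: w => [|x t IH] //= Hr.
have Ht : reduced t by case: t Hr {IH} => //= y t /andP[].
rewrite (IH Ht). case: t Hr {IH Ht} => //= y t /andP[H _].
by move: H; rewrite /nr => /negbTE ->.
Qed.

Lemma inv_inv x y z : inv_letters x y -> inv_letters y z -> x = z.
Proof.
case: x y z => [a b] [c d] [e f]; rewrite /inv_letters /= => /andP[/eqP-> H1] /andP[/eqP-> H2].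
by congr pair; move: H1 H2; case: b; case: d; case: f.
Qed.

Lemma step_inv x y R : inv_letters x y -> reduced R -> step x (step y R) = R.
Proof.
move=> Hxy; case: R => [|z t] /=; first by rewrite Hxy.
case: ifP => Hyz HR /=; last by rewrite Hxy.
rewrite -(inv_inv Hxy Hyz) in HR *.
case: t HR => //= u t /andP[H _]; by move: H; rewrite /nr => /negbTE ->.
Qed.

Arguments freduce : simpl never.
Lemma filter_freduce (q : pred 'I_n) w :
  freduce [seq x <- w | q x.1] = freduce [seq x <- freduce w | q x.1].
Proof.
elim: w => [|x w IH] //.
have Hr := reduced_freduce w.
rewrite freduce_cons.
case E: (freduce w) Hr => [|y t] Hr.
  by rewrite /=; case: (q x.1); rewrite ?freduce_cons IH E.
rewrite /step.
case: ifP => Hi.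
  have Ey : y.1 = x.1 by case/andP: Hi => /eqP.
  have Ht : reduced t by case: t Hr {E} => //= z t /andP[].
  rewrite /=; case Eq: (q x.1); rewrite ?freduce_cons IH E /= Ey Eq //.
  rewrite freduce_cons step_inv //; exact: reduced_freduce.
rewrite -E /=; case: (q x.1); rewrite ?freduce_cons IH //.
Qed.

Lemma size_notin (S : {set 'I_n}) : size [seq i <- enum 'I_n | i \notin S] = #|~: S|.
Proof. have /card_uniqP <- := filter_uniq (fun i => i \notin S) (enum_uniq 'I_n).
by apply: eq_card => i; rewrite mem_filter mem_enum in_setC andbT. Qed.

Lemma path_same (a : 'I_n) b (L : seq 'I_n) : path nr (a, b) [seq (i, b) | i <- L].
Proof.
elim: L a => [|c L IH] a //=; rewrite IH andbT /nr /inv_letters /= eqxx andbF //.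
Qed.

Definition cw (L : seq 'I_n) : seq (letter n) := [seq (i, true) | i <- L] ++ [seq (i, false) | i <- L].

Lemma reduced_cw L : uniq L -> 1 < size L -> reduced (cw L).
Proof.
case: L => [|a L] //= /andP[aL _] HL.
rewrite cat_path path_same /= last_map.
rewrite path_same andbT /nr /inv_letters /= andbT.
case: L aL HL => [|b L] // aL _.
apply/negP => /eqP E; move: aL; rewrite -E.
by move=> /negP; apply; exact: (mem_last b L).
Qed.

Lemma filter_cw (q : pred 'I_n) L :
  [seq x <- cw L | q x.1] = cw [seq i <- L | q i].
Proof. by rewrite /cw filter_cat !filter_map. Qed.

Lemma cw_small L : size L <= 1 -> freduce (cw L) = [::].
Proof.
case: L => [|a [|b L]] //= _.
by rewrite /freduce /= /inv_letters /= eqxx.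
Qed.

Lemma size_count (s : seq (letter n)) : size s = \sum_(i < n) count (fun x : letter n => x.1 == i) s.
Proof.
elim: s => [|x s IH] /=; first by rewrite big1.
rewrite big_split /= -IH (bigD1 x.1) //= eqxx big1 // => i /negbTE.
by rewrite eq_sym => ->.
Qed.
End S.

Lemma card_compl n (A : {set 'I_n}) : #|~: A| = n - #|A|.
Proof. have := cardsC A; rewrite card_ord; lia. Qed.

Lemma rt_u n (w : seq (letter n)) S :
  restrict_trivial w S = (freduce [seq x <- freduce w | x.1 \notin S] == [::]).
Proof. by rewrite /restrict_trivial (filter_freduce (fun i => i \notin S)). Qed.

Unset Implicit Arguments.
Theorem proposition2 (n : nat) (hn : 2 <= n) :
  is_solution n.-1 (commutator_word n) /\
  glength (commutator_word n) = 2 * n /\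
  (forall w : seq (letter n), is_solution n.-1 w -> 2 * n <= glength w).
Proof.
have cwE : commutator_word n = cw (enum 'I_n) by [].
split; [|split].
- move=> S; rewrite /restrict_trivial cwE (filter_cw (fun i => i \notin S)).
  have Hs := size_notin S; rewrite card_compl in Hs.
  have HS : #|S| <= n by have := max_card (mem S); rewrite card_ord.
  set L := [seq i <- enum 'I_n | i \notin S] in Hs *.
  case: (leqP (size L) 1) => HL.
    rewrite cw_small // eqxx; split => // _; lia.
  rewrite freduce_id; last by apply: reduced_cw => //; exact: filter_uniq (enum_uniq _).
  have -> : (cw L == [::]) = false by case: L HL {Hs}.
  split => // H; lia.
- rewrite /glength cwE freduce_id; last by apply: reduced_cw; rewrite ?enum_uniq // -cardE card_ord.
  by rewrite /cw size_cat !size_map -enumT size_enum_ord mul2n addnn.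
move=> w Hw; rewrite /glength size_count.
apply: (@leq_trans (\sum_(i < n) 2)); first by rewrite sum_nat_const card_ord mulnC.
apply: leq_sum => i _.
set u := freduce w.
have triv (S : {set 'I_n}) : (freduce [seq x <- u | x.1 \notin S] == [::]) = (n.-1 <= #|S|).
  by rewrite /u -rt_u; apply/idP/idP => /(Hw S).
have H1 := triv (~: [set i]).
rewrite card_compl cards1 (eq_filter (a2 := fun x : letter n => x.1 == i)) in H1; last first.
  by move=> x; rewrite in_setC in_set1 negbK.
rewrite -size_filter.
case Ec: [seq x <- u | x.1 == i] H1 => [|x [|y t]] H1 //; last first.
  have : n.-1 <= n - 1 by lia.
  by rewrite -H1 /freduce.
have : 0 < #|~: [set i]| by rewrite card_compl cards1; lia.
case/card_gt0P => j; rewrite in_setC in_set1 => ji.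
have H2 := triv (~: [set i; j]).
have H3 := triv (~: [set j]).
have E : [seq x <- u | x.1 \notin ~: [set i; j]] = [seq x <- u | x.1 \notin ~: [set j]].
  apply: eq_in_filter => x xu.
  have : ~~ (x.1 == i).
    apply/negP => xi.
    have : x \in [seq x <- u | x.1 == i] by rewrite mem_filter xi.
    by rewrite Ec.
  by rewrite !in_setC !negbK !in_set2 !in_set1 => /negbTE ->.
rewrite E H3 card_compl cards1 card_compl cards2 eq_sym ji in H2.
have : n.-1 <= n - 1 by lia.
move: H2; case: (n.-1 <= n - 1) => // H2.
symmetry in H2; move: H2; rewrite -[_ <= _]/(n.-1 <= n - 2) => H2 _; lia.
Qed.
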